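(* Let $T$ be a string and $T'$ be obtained from $T$ by a single character edit (insertion, substitution, or deletion) at position $i$. Then every string $x\in \mathcal{N}_1\cup\mathcal{N}_3^{\neg\mathrm{v}}$ occurs in $T$ (i.e. $x\in\mathrm{Substr}(T)$).
   Context: Strings are over an alphabet $\Sigma$; $\mathrm{Substr}(T)$, $\mathrm{Prefix}(T)$, $\mathrm{Suffix}(T)$ are the sets of substrings, prefixes, suffixes of $T$. A string $w\in\mathrm{Substr}(T)$ is left-maximal in $T$ if $w\in\mathrm{Prefix}(T)$ or there exist distinct $a,b\in\Sigma$ with $aw,bw\in\mathrm{Substr}(T)$; right-maximal if $w\in\mathrm{Suffix}(T)$ or there exist distinct $a,b$ with $wa,wb\in\mathrm{Substr}(T)$. $\mathsf{LeftM}(T)$, $\mathsf{RightM}(T)$ denote these sets and $\mathsf{M}(T)=\mathsf{LeftM}(T)\cap\mathsf{RightM}(T)$. Edit setting: $|T|=n$. Insertion: $|T'|=n+1$, $T'[1..i-1]=T[1..i-1]$, $T'[i]$ is the inserted character, $T'[i+1..n+1]=T[i..n]$. Substitution: $|T'|=n$, $T'[i]\ne T[i]$, $T'[j]=T[j]$ for $j\neq i$. Deletion: $T'=T[1..i-1]T[i+1..n]$ (position $i$ of $T'$ is the edited position). A crossing occurrence of a nonempty string $x$ is an occurrence $T'[j..k]=x$ such that, for insertion/substitution, $k=i-1$, or $j\le i\le k$, or $j=i+1$; and for deletion, $k=i-1$, or ($j\le i-1$ and $i\le k$), or $j=i$. $x$ is of Type (v) if (1) $x$ has at least two crossing occurrences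 in $T'$, and (2) if all occurrences of $x$ in $T'$ are crossing occurrences then $x\in\mathsf{M}(T')$. Let $\mathcal{N}=(\mathsf{M}(T')\setminus\mathsf{M}(T))\setminus\{T'\}$, $\mathcal{N}_1=\mathcal{N}\cap\mathsf{RightM}(T)$, $\mathcal{N}_2=\mathcal{N}\cap\mathsf{LeftM}(T)$, $\mathcal{N}_3=\mathcal{N}\setminus(\mathcal{N}_1\cup\mathcal{N}_2)$. Let $\mathcal{N}_3^{\mathrm{v}}$ be the set of $x\in\mathcal{N}_3$ such that $x$ is of Type (v) and every character $a$ with $xa\in\mathrm{Substr}(T')$ is the character immediately following some crossing occurrence of $x$ in $T'$; let $\mathcal{N}_3^{\neg\mathrm{v}}=\mathcal{N}_3\setminus\mathcal{N}_3^{\mathrm{v}}$. *)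

(* Defs.v *)
From mathcomp Require Import all_boot.
Set Implicit Arguments. Unset Strict Implicit. Unset Printing Implicit Defensive.

Section Strings.
Variable A : eqType.
Implicit Types (T w x : seq A).

(* Substr(T), Prefix(T), Suffix(T): mathcomp's [infix], [prefix], [suffix]. *)
Definition substr T w : Prop := infix w T.

Definition leftM T w : Prop :=
  infix w T /\ (prefix w T \/ exists a b : A, a != b /\ infix (a :: w) T /\ infix (b :: w) T).

Definition rightM T w : Prop :=
  infix w T /\ (suffix w T \/ exists a b : A, a != b /\ infix (rcons w a) T /\ infix (rcons w b) T).

Definition maxM T w : Prop := leftM T w /\ rightM T w.

(* Single character edits; positions are 1-based as in the paper. *)
Inductive edit_op := Ins of A | Subst of A | Del.

Definition is_edit (op : edit_op) T T' (i : nat) : Prop :=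
  match op with
  | Ins c => 1 <= i <= (size T).+1 /\ T' = take i.-1 T ++ c :: drop i.-1 T
  | Subst c => 1 <= i <= size T /\ c != nth c T i.-1 /\ T' = take i.-1 T ++ c :: drop i T
  | Del => 1 <= i <= size T /\ T' = take i.-1 T ++ drop i T
  end.

(* T'[j..k] = x, 1-based, 1 <= j <= k <= |T'| *)
Definition occ T' x (j k : nat) : Prop :=
  [/\ 1 <= j, j <= k, k <= size T' & drop j.-1 (take k T') = x].

Definition crossing_pos (op : edit_op) (i j k : nat) : Prop :=
  match op with
  | Del => k = i.-1 \/ (j <= i.-1 /\ i <= k) \/ j = i
  | _ => k = i.-1 \/ (j <= i <= k) \/ j = i.+1
  end.

Definition crossing_occ op T' i x j k : Prop := occ T' x j k /\ crossing_pos op i j k.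

Definition typeV op T' i x : Prop :=
  (exists j k j' k', crossing_occ op T' i x j k /\ crossing_occ op T' i x j' k' /\ (j, k) <> (j', k'))
  /\ ((forall j k, occ T' x j k -> crossing_pos op i j k) -> maxM T' x).

Definition inN T T' x : Prop := maxM T' x /\ ~ maxM T x /\ x <> T'.
Definition inN1 T T' x : Prop := inN T T' x /\ rightM T x.
Definition inN2 T T' x : Prop := inN T T' x /\ leftM T x.
Definition inN3 T T' x : Prop := inN T T' x /\ ~ inN1 T T' x /\ ~ inN2 T T' x.

(* T'[k+1] (1-based) is nth _ T' k *)
Definition inN3v op T T' i x : Prop :=
  inN3 T T' x /\ typeV op T' i x /\
  (forall a : A, infix (rcons x a) T' ->
     exists j k, crossing_occ op T' i x j k /\ k < size T' /\ nth a T' k = a).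

Definition inN3notv op T T' i x : Prop := inN3 T T' x /\ ~ inN3v op T T' i x.

End Strings.

(* Main.v *)
Require Import Defs.
From mathcomp Require Import all_boot.
From mathcomp Require Import zify.
From Stdlib Require Import Classical.

Set Implicit Arguments.
Section Aux.
Variable A : eqType.
Implicit Types (T w x s P S m : seq A).

Lemma infix_drop_take s a b : infix (drop a (take b s)) s.
Proof.
apply/infixP; exists (take a (take b s)), (drop b s).
by rewrite catA cat_take_drop cat_take_drop.
Qed.

Lemma occ_cat T' s1 x s2 : T' = s1 ++ x ++ s2 -> x != [::] ->
  occ T' x (size s1).+1 (size s1 + size x).
Proof.
move=> -> hx; have hs : 0 < size x by case: x hx.
split => //; first lia.
- rewrite !size_cat; lia.
- rewrite /= catA take_size_cat ?size_cat //.
  by rewrite drop_size_cat.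
Qed.

Lemma noncross P m m' S x j k : occ (P ++ m' ++ S) x j k ->
  (k <= size P \/ size P + size m' <= j.-1) -> infix x (P ++ m ++ S).
Proof.
case=> h1 h2 h3 hx [hk|hj].
- rewrite takel_cat // in hx.
  apply: (infix_trans (y := P)); first by rewrite -hx infix_drop_take.
  exact: prefix_infix.
- have e : P ++ m' ++ S = (P ++ m') ++ S by rewrite catA.
  rewrite e take_cat size_cat in hx.
  have e1 : (k < size P + size m') = false by apply/negbTE; rewrite -leqNgt; lia.
  rewrite e1 drop_cat size_cat in hx.
  have e2 : (j.-1 < size P + size m') = false by apply/negbTE; rewrite -leqNgt; lia.
  rewrite e2 in hx.
  apply: (infix_trans (y := S)); first by rewrite -hx infix_drop_take.
  rewrite catA; exact: suffix_infix.
Qed.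

Lemma edit_decomp op T T' i : is_edit op T T' i ->
  exists P m m' S, [/\ T = P ++ m ++ S, T' = P ++ m' ++ S &
   forall j k, ~ crossing_pos op i j k -> j <= k ->
     (k <= size P \/ size P + size m' <= j.-1)].
Proof.
case: op => [c|c|] /=.
- case=> /andP[h1 h2] ->.
  exists (take i.-1 T), [::], [:: c], (drop i.-1 T); split => //.
  + by rewrite cat_take_drop.
  + move=> j k hc hjk; rewrite size_takel; last lia.
    have : ~ (k = i.-1) by tauto.
    have : ~ (j <= i <= k) by tauto.
    have : ~ (j = i.+1) by tauto.
    move=> a b d /=.
    case: (leqP k i.-1) => hk; [by left|right].
    have hik : i <= k by lia.
    have hji : i < j by case: (leqP j i) => // hh; exfalso; apply: b; rewrite hh hik.
    lia.
- case=> /andP[h1 h2] [hne ->].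
  exists (take i.-1 T), [:: nth c T i.-1], [:: c], (drop i T); split => //.
  + rewrite -{1}(cat_take_drop i.-1 T) (drop_nth c); last lia.
    by have -> : i.-1.+1 = i by lia.
  + move=> j k hc hjk; rewrite size_takel; last lia.
    have : ~ (k = i.-1) by tauto.
    have : ~ (j <= i <= k) by tauto.
    have : ~ (j = i.+1) by tauto.
    move=> a b d /=.
    case: (leqP k i.-1) => hk; [by left|right].
    have hik : i <= k by lia.
    have hji : i < j by case: (leqP j i) => // hh; exfalso; apply: b; rewrite hh hik.
    lia.
- case=> /andP[h1 h2] ->.
  case: T h2 => [|t0 T0] h2; first by rewrite /= in h2; lia.
  move: (t0 :: T0) h2 => T h2.
  exists (take i.-1 T), [:: nth t0 T i.-1], [::], (drop i T); split => //.
  + rewrite -{1}(cat_take_drop i.-1 T) (drop_nth t0); last lia.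
    by have -> : i.-1.+1 = i by lia.
  + move=> j k hc hjk; rewrite size_takel; last lia.
    have : ~ (k = i.-1) by tauto.
    have : ~ (j <= i.-1 /\ i <= k) by tauto.
    have : ~ (j = i) by tauto.
    move=> a b d /=.
    case: (leqP k i.-1) => hk; [by left|right].
    have hik : i <= k by lia.
    have hji : i.-1 < j by case: (leqP j i.-1) => // hh; exfalso; apply: b; split.
    lia.
Qed.

End Aux.

Theorem lemma1 (A : eqType) (op : edit_op A) (T T' : seq A) (i : nat) :
  is_edit op T T' i ->
  forall x : seq A, inN1 T T' x \/ inN3notv op T T' i x -> substr T x.
Proof.
move=> He x [[_ [hT _]] | [H3 Hnv]]; first exact: hT.
rewrite /substr; case: (boolP (infix x T)) => // Hn; exfalso; apply: Hnv.
have [[HM [_ Hne]] _] := H3.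
have [P [m [m' [S [eT eT' Hc]]]]] := @edit_decomp A op T T' i He.
have allc : forall j k, occ T' x j k -> crossing_pos op i j k.
  move=> j k ho; apply: NNPP => hc; move/negP: Hn; apply.
  have hjk : j <= k by case: ho.
  rewrite eT; apply: (@noncross A P m m' S x j k); first by rewrite -eT'.
  exact: Hc.
have xn : x != [::] by apply/eqP => ex; move: Hn; rewrite ex infix0s.
have ext_r : forall a : A, infix (rcons x a) T' -> exists s1 : seq A,
    occ T' x (size s1).+1 (size s1 + size x) /\ size s1 + size x < size T'
    /\ nth a T' (size s1 + size x) = a.
  move=> a ha; have [s1 [s2 e]] := infixP ha; exists s1; rewrite e cat_rcons.
  split; first exact: occ_cat.
  rewrite !size_cat /= catA nth_cat size_cat ltnn subnn; split => //; lia.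
have [[_ HL] [_ HR]] := HM.
have HL' : occ T' x 1 (size x) \/ exists j k j' k', occ T' x j k /\ occ T' x j' k' /\ (j, k) <> (j', k').
  case: HL => [/prefixP [s2 e]|[a [b [hab [ha hb]]]]].
    by left; apply: (@occ_cat A T' [::] x s2).
  right; case/infixP: ha => s1 [s2 e1]; case/infixP: hb => t1 [t2 e2].
  exists (size (rcons s1 a)).+1, (size (rcons s1 a) + size x),
         (size (rcons t1 b)).+1, (size (rcons t1 b) + size x).
  split; first by apply: (@occ_cat A T' (rcons s1 a) x s2) => //; rewrite e1 cat_rcons.
  split; first by apply: (@occ_cat A T' (rcons t1 b) x t2) => //; rewrite e2 cat_rcons.
  case=> es _; move/negP: hab; apply; apply/eqP.
  rewrite !size_rcons in es; case: es => es.
  have n1 : nth a T' (size s1) = a by rewrite e1 nth_cat ltnn subnn.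
  have n2 : nth a T' (size s1) = b by rewrite e2 es nth_cat ltnn subnn.
  by rewrite -n1 -n2.
have HR' : occ T' x (size T' - size x).+1 (size T') \/ exists j k j' k', occ T' x j k /\ occ T' x j' k' /\ (j, k) <> (j', k').
  case: HR => [/suffixP [s2 e]|[a [b [hab [ha hb]]]]].
    left; have -> : size T' = size s2 + size x by rewrite e size_cat.
    have -> : size s2 + size x - size x = size s2 by lia.
    by apply: (@occ_cat A T' s2 x [::]) => //; rewrite e cats0.
  right; have [s1 [o1 [l1 n1]]] := ext_r a ha; have [t1 [o2 [l2 n2]]] := ext_r b hb.
  exists (size s1).+1, (size s1 + size x), (size t1).+1, (size t1 + size x).
  do 2 split => //.
  case=> es _; move/negP: hab; apply; apply/eqP.
  by rewrite -n1 -n2 es; apply: set_nth_default; rewrite -es.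
have two : exists j k j' k', occ T' x j k /\ occ T' x j' k' /\ (j, k) <> (j', k').
  case: HL' => // o1; case: HR' => // o2.
  case: (boolP ((1, size x) == ((size T' - size x).+1, size T'))) => [/eqP [_ ex]|hn].
    exfalso; apply: Hne; case: o1 => _ _ _; rewrite drop0 ex take_size.
    by move=> <-.
  by exists 1, (size x), (size T' - size x).+1, (size T'); split => //; split => //; apply/eqP.
split => //; split.
  split.
    case: two => j [k [j' [k' [o1 [o2 ne]]]]].
    by exists j, k, j', k'; split; [split => //; exact: allc|split => //; split => //; exact: allc].
  by move=> _.
move=> a ha; have [s1 [o1 [lt n1]]] := ext_r a ha.
exists (size s1).+1, (size s1 + size x); split => //; split => //; exact: allc.
Qed.
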